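(* For the $b$-coupled spin-oscillator $F=(L,H)$, the only singular points (points where $dF$ has rank $<2$) are the two points $N=((0,0,1),(0,0))$ and $S=((0,0,-1),(0,0))$ of $S^2\times\mathbb R^2$. Both are fixed points ($dL=dH=0$), both are non-degenerate and of focus-focus type, and $dF$ has rank $2$ at every other point of $M$ (there are no singular points of rank $1$).
   Context: Fix constants $\rho_1,\rho_2>0$. Let $M=S^2\times\mathbb R^2$, where $S^2\subset\mathbb R^3$ is the unit sphere with coordinates $(x,y,z)$, $x^2+y^2+z^2=1$, and $(u,v)$ are coordinates on $\mathbb R^2$; let $Z=\{z=0\}\times\mathbb R^2$. On $\{|z|<1\}$ use cylindrical coordinates $(\theta,z)$ with $\theta=\arg(x+iy)$; on $\{z\neq0\}$ use $(x,y)$ as coordinates on each open hemisphere. The $b$-symplectic form is $\omega=-\rho_1\,\omega^b_{S^2}+\rho_2\,du\wedge dv$, where $\omega^b_{S^2}=d\theta\wedge\frac{dz}{z}$ on $\{|z|<1\}$ and $\omega^b_{S^2}=\frac{1}{1-x^2-y^2}dx\wedge dy$ on $\{z\ne0\}$. The $b$-coupled spin-oscillator is $F=(L,H)$ with $L=\rho_1\log|z|+\frac{\rho_2}{2}(u^2+v^2)$ and $H=\frac12(xu+yv)$; differentials are taken as $b$-forms. A fixed point $p$ (located away from $Z$) with $\Omega$ the matrix of $\omega$ at $p$ is non-degenerate if the operators $A_L=\Omega^{-1}d^2L(p)$, $A_H=\Omega^{-1}d^2H(p)$ span a Cartan subalgebra of $\mathfrak{sp}(4,\mathbb R)$ (in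 particular $d^2L(p),d^2H(p)$ are linearly independent and some combination $c_1A_L+c_2A_H$ has four distinct eigenvalues); it is of focus-focus type if such a combination has eigenvalues $\pm\alpha\pm i\beta$ with $\alpha,\beta\in\mathbb R\setminus\{0\}$, and of elliptic-elliptic type if they are $\pm i\alpha,\pm i\beta$ with $\alpha\ne\beta$ nonzero reals. *)

(* Defs.v *)
From Stdlib Require Import Reals.
From Coquelicot Require Import Coquelicot.
From mathcomp Require Import all_boot all_algebra.
From mathcomp Require Import Rstruct.

Set Implicit Arguments.
Unset Strict Implicit.
Unset Printing Implicit Defensive.

Import GRing.Theory.
Local Open Scope ring_scope.

Definition k0 : 'I_4 := @Ordinal 4 0 isT.
Definition k1 : 'I_4 := @Ordinal 4 1 isT.
Definition k2 : 'I_4 := @Ordinal 4 2 isT.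
Definition k3 : 'I_4 := @Ordinal 4 3 isT.

Definition mkq (a b c d : R) : 'I_4 -> R :=
  fun i => match val i with 0%N => a | 1%N => b | 2%N => c | _ => d end.

Definition upd (q : 'I_4 -> R) (i : 'I_4) (t : R) : 'I_4 -> R :=
  fun j => if j == i then t else q j.

Definition pd (f : ('I_4 -> R) -> R) (i : 'I_4) (q : 'I_4 -> R) : R :=
  Derive (fun t => f (upd q i t)) (q i).

Definition grad (f : ('I_4 -> R) -> R) (q : 'I_4 -> R) : 'rV[R]_4 :=
  \row_i pd f i q.

Definition hess (f : ('I_4 -> R) -> R) (q : 'I_4 -> R) : 'M[R]_4 :=
  \matrix_(i, j) pd (pd f j) i q.

Definition onM (x y z u v : R) : Prop := x ^+ 2 + y ^+ 2 + z ^+ 2 = 1.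

Definition Lsm (rho2 u v : R) : R := rho2 / 2 * (u ^+ 2 + v ^+ 2).
Definition L_M (rho1 rho2 x y z u v : R) : R :=
  rho1 * ln (Rabs z) + Lsm rho2 u v.
Definition H_M (x y z u v : R) : R := (x * u + y * v) / 2.

(* s = 1 : upper hemisphere, s = -1 : lower hemisphere *)
Definition zhem (s : R) (q : 'I_4 -> R) : R :=
  s * sqrt (1 - q k0 ^+ 2 - q k1 ^+ 2).
Definition L_hem (rho1 rho2 s : R) (q : 'I_4 -> R) : R :=
  L_M rho1 rho2 (q k0) (q k1) (zhem s q) (q k2) (q k3).
Definition H_hem (s : R) (q : 'I_4 -> R) : R :=
  H_M (q k0) (q k1) (zhem s q) (q k2) (q k3).

(* away from Z, b-forms are ordinary forms: dF in basis (dx,dy,du,dv) *)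
Definition dF_hem (rho1 rho2 s : R) (q : 'I_4 -> R) : 'M[R]_(1 + 1, 4) :=
  col_mx (grad (L_hem rho1 rho2 s) q) (grad (H_hem s) q).

(* matrix of omega = - rho1 dx/\dy/(1-x^2-y^2) + rho2 du/\dv at q,
   Omega i j = omega(e_i, e_j) in the basis (d/dx, d/dy, d/du, d/dv) *)
Definition Omega_hem (rho1 rho2 : R) (q : 'I_4 -> R) : 'M[R]_4 :=
  let a := - rho1 / (1 - q k0 ^+ 2 - q k1 ^+ 2) in
  \matrix_(i, j)
    if (i == k0) && (j == k1) then a
    else if (i == k1) && (j == k0) then - a
    else if (i == k2) && (j == k3) then rho2
    else if (i == k3) && (j == k2) then - rho2
    else 0.

Definition xcyl (q : 'I_4 -> R) : R := sqrt (1 - q k1 ^+ 2) * cos (q k0).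
Definition ycyl (q : 'I_4 -> R) : R := sqrt (1 - q k1 ^+ 2) * sin (q k0).
Definition Lsm_cyl (rho2 : R) (q : 'I_4 -> R) : R := Lsm rho2 (q k2) (q k3).
Definition H_cyl (q : 'I_4 -> R) : R :=
  H_M (xcyl q) (ycyl q) (q k1) (q k2) (q k3).

(* b-differential of a smooth g in the b-cotangent basis
   (dtheta, dz/z, du, dv): coefficients (g_theta, z g_z, g_u, g_v) *)
Definition bgrad (g : ('I_4 -> R) -> R) (q : 'I_4 -> R) : 'rV[R]_4 :=
  \row_i (if i == k1 then q k1 * pd g i q else pd g i q).

(* b-differential of the b-function L = rho1 log|z| + Lsm:
   dL = rho1 dz/z + d(Lsm) *)
Definition bdL_cyl (rho1 rho2 : R) (q : 'I_4 -> R) : 'rV[R]_4 :=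
  (\row_i (if i == k1 then rho1 else 0)) + bgrad (Lsm_cyl rho2) q.
Definition bdH_cyl (q : 'I_4 -> R) : 'rV[R]_4 := bgrad H_cyl q.

Definition dF_cyl (rho1 rho2 : R) (q : 'I_4 -> R) : 'M[R]_(1 + 1, 4) :=
  col_mx (bdL_cyl rho1 rho2 q) (bdH_cyl q).

Definition sgnz (z : R) : R := if 0 < z then 1 else -1.

Definition b_rank_dF (rho1 rho2 x y z u v : R) (r : nat) : Prop :=
  (z != 0 -> \rank (dF_hem rho1 rho2 (sgnz z) (mkq x y u v)) = r) /\
  (forall theta : R, -1 < z < 1 ->
     x = sqrt (1 - z ^+ 2) * cos theta -> y = sqrt (1 - z ^+ 2) * sin theta ->
     \rank (dF_cyl rho1 rho2 (mkq theta z u v)) = r).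

Definition singular_pt (rho1 rho2 x y z u v : R) : Prop :=
  exists r : nat, (r < 2)%N /\ b_rank_dF rho1 rho2 x y z u v r.

Definition fixed_pt (rho1 rho2 x y z u v : R) : Prop :=
  (z != 0 -> grad (L_hem rho1 rho2 (sgnz z)) (mkq x y u v) = 0 /\
             grad (H_hem (sgnz z)) (mkq x y u v) = 0) /\
  (forall theta : R, -1 < z < 1 ->
     x = sqrt (1 - z ^+ 2) * cos theta -> y = sqrt (1 - z ^+ 2) * sin theta ->
     bdL_cyl rho1 rho2 (mkq theta z u v) = 0 /\ bdH_cyl (mkq theta z u v) = 0).

Definition in_sp (Om X : 'M[R]_4) : Prop := X^T *m Om + Om *m X = 0.
Definition lie (X Y : 'M[R]_4) : 'M[R]_4 := X *m Y - Y *m X.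
Definition in_span2 (A B X : 'M[R]_4) : Prop :=
  exists c1 c2 : R, X = c1 *: A + c2 *: B.
Definition iter_lie (Xs : seq 'M[R]_4) (Y : 'M[R]_4) : 'M[R]_4 :=
  foldr lie Y Xs.

(* span{A,B} is a Cartan subalgebra of sp(Omega): a Lie subalgebra which is
   nilpotent and self-normalizing in sp(Omega) *)
Definition cartan_span (Om A B : 'M[R]_4) : Prop :=
  in_sp Om A /\ in_sp Om B /\
  (forall X Y, in_span2 A B X -> in_span2 A B Y -> in_span2 A B (lie X Y)) /\
  (exists n : nat, forall (Xs : seq 'M[R]_4) (Y : 'M[R]_4),
      size Xs = n -> (forall X, X \in Xs -> in_span2 A B X) -> in_span2 A B Y ->
      iter_lie Xs Y = 0) /\
  (forall X, in_sp Om X ->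
     (forall Y, in_span2 A B Y -> in_span2 A B (lie X Y)) -> in_span2 A B X).

Definition nondeg_focus_focus (rho1 rho2 x y z u v : R) : Prop :=
  z != 0 /\
  let q := mkq x y u v in
  let Om := Omega_hem rho1 rho2 q in
  let AL := invmx Om *m hess (L_hem rho1 rho2 (sgnz z)) q in
  let AH := invmx Om *m hess (H_hem (sgnz z)) q in
  cartan_span Om AL AH /\
  exists c1 c2 alpha beta : R, alpha != 0 /\ beta != 0 /\
    (* eigenvalues of c1 AL + c2 AH are  +-alpha +- i beta *)
    char_poly (c1 *: AL + c2 *: AH) =
      (('X - alpha%:P) ^+ 2 + (beta ^+ 2)%:P) *
      (('X + alpha%:P) ^+ 2 + (beta ^+ 2)%:P).

(* Main.v *)
Require Import Defs.
From Stdlib Require Import Reals Lra Classical FunctionalExtensionality.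
From Coquelicot Require Import Coquelicot.
From mathcomp Require Import all_boot all_algebra.
From mathcomp Require Import Rstruct.

Lemma mkq0 a b c d : mkq a b c d k0 = a. Proof. by []. Qed.
Lemma mkq1 a b c d : mkq a b c d k1 = b. Proof. by []. Qed.
Lemma mkq2 a b c d : mkq a b c d k2 = c. Proof. by []. Qed.
Lemma mkq3 a b c d : mkq a b c d k3 = d. Proof. by []. Qed.
Lemma upd_mkq0 a b c d t : upd (mkq a b c d) k0 t = mkq t b c d.
Proof. apply: functional_extensionality => -[[|[|[|[|j]]]] Hj] //. Qed.
Lemma upd_mkq1 a b c d t : upd (mkq a b c d) k1 t = mkq a t c d.
Proof. apply: functional_extensionality => -[[|[|[|[|j]]]] Hj] //. Qed.
Lemma upd_mkq2 a b c d t : upd (mkq a b c d) k2 t = mkq a b t d.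
Proof. apply: functional_extensionality => -[[|[|[|[|j]]]] Hj] //. Qed.
Lemma upd_mkq3 a b c d t : upd (mkq a b c d) k3 t = mkq a b c t.
Proof. apply: functional_extensionality => -[[|[|[|[|j]]]] Hj] //. Qed.
Definition mkqs := (mkq0, mkq1, mkq2, mkq3).
Open Scope R_scope.
Lemma Lhem_mkq r1 r2 s a b c d : L_hem r1 r2 s (mkq a b c d) =
  r1 * ln (Rabs (s * sqrt (1 - a^2 - b^2))) + r2 / 2 * (c^2 + d^2).
Proof. by rewrite /L_hem /L_M /Lsm /zhem !mkqs !RealsE. Qed.
Lemma Hhem_mkq s a b c d : H_hem s (mkq a b c d) = (a * c + b * d) / 2.
Proof. by rewrite /H_hem /H_M !mkqs !RealsE. Qed.
Lemma Lsmcyl_mkq r2 a b c d : Lsm_cyl r2 (mkq a b c d) = r2 / 2 * (c^2 + d^2).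
Proof. by rewrite /Lsm_cyl /Lsm !mkqs !RealsE. Qed.
Lemma Hcyl_mkq a b c d : H_cyl (mkq a b c d) = (sqrt (1 - b^2) * cos a * c + sqrt (1 - b^2) * sin a * d) / 2.
Proof. by rewrite /H_cyl /H_M /xcyl /ycyl !mkqs !RealsE. Qed.

Lemma pd_is f i q l : is_derive (fun t => f (upd q i t)) (q i) l -> pd f i q = l.
Proof. move=> H; exact: is_derive_unique. Qed.
Lemma pd0 f a b c d l : is_derive (fun t => f (mkq t b c d)) a l -> pd f k0 (mkq a b c d) = l.
Proof. move=> H; apply: pd_is; rewrite mkq0; apply: (is_derive_ext _ _ _ _ _ H) => t; by rewrite upd_mkq0. Qed.
Lemma pd1 f a b c d l : is_derive (fun t => f (mkq a t c d)) b l -> pd f k1 (mkq a b c d) = l.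
Proof. move=> H; apply: pd_is; rewrite mkq1; apply: (is_derive_ext _ _ _ _ _ H) => t; by rewrite upd_mkq1. Qed.
Lemma pd2 f a b c d l : is_derive (fun t => f (mkq a b t d)) c l -> pd f k2 (mkq a b c d) = l.
Proof. move=> H; apply: pd_is; rewrite mkq2; apply: (is_derive_ext _ _ _ _ _ H) => t; by rewrite upd_mkq2. Qed.
Lemma pd3 f a b c d l : is_derive (fun t => f (mkq a b c t)) d l -> pd f k3 (mkq a b c d) = l.
Proof. move=> H; apply: pd_is; rewrite mkq3; apply: (is_derive_ext _ _ _ _ _ H) => t; by rewrite upd_mkq3. Qed.

Lemma sign_abs_inv v : v <> 0 -> sign v * / Rabs v = / v.
Proof.
move=> Hv. case: (Rlt_or_le 0 v) => H.
- rewrite sign_eq_1 // Rabs_pos_eq; [field|]; lra.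
- have H' : v < 0 by lra. rewrite sign_eq_m1 // Rabs_left //; field; lra.
Qed.

Lemma ln_abs_deriv s a x : (s = 1 \/ s = -1) -> 0 < 1 - x^2 - a^2 ->
  is_derive (fun t => ln (Rabs (s * sqrt (1 - t^2 - a^2)))) x (- x / (1 - x^2 - a^2)).
Proof.
move=> Hs Hw.
have HS := sqrt_lt_R0 _ Hw.
have HS2 := sqrt_sqrt _ (Rlt_le _ _ Hw).
auto_derive.
- split; first by lra.
  have Hne : s * sqrt (1 + - (x * (x * 1)) + - (a * (a * 1))) <> 0.
    case: Hs => ->; replace (1 + - (x * (x * 1)) + - (a * (a * 1))) with (1 - x^2 - a^2) by ring; nra.
  split => //; split => //. by apply Rabs_pos_lt.
- replace (1 + - (x * (x * 1)) + - (a * (a * 1))) with (1 - x^2 - a^2) by ring.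
  have HS2' : sqrt (1 - x ^ 2 - a ^ 2) ^ 2 = 1 - x ^ 2 - a ^ 2 by apply pow2_sqrt; lra.
  rewrite Rmult_assoc sign_abs_inv; last by case: Hs => ->; nra.
  case: Hs => ->; (field_simplify_eq; [rewrite HS2'; ring | split; lra]).
Qed.

Section Hem.
Variables (r1 r2 s : R).
Hypothesis Hs : s = 1 \/ s = -1.

Lemma pdL0 a b c d : 0 < 1 - a^2 - b^2 ->
  pd (L_hem r1 r2 s) k0 (mkq a b c d) = - r1 * a / (1 - a^2 - b^2).
Proof.
move=> Hw; apply: pd0.
apply: (is_derive_ext (fun t => r1 * ln (Rabs (s * sqrt (1 - t^2 - b^2))) + r2 / 2 * (c^2 + d^2))).
  by move=> t; rewrite Lhem_mkq.
have -> : - r1 * a / (1 - a^2 - b^2) = r1 * (- a / (1 - a^2 - b^2)) + 0 by rewrite /Rdiv; ring.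
apply: is_derive_plus; [apply: is_derive_scal; exact: ln_abs_deriv | apply: is_derive_const].
Qed.

Lemma pdL1 a b c d : 0 < 1 - a^2 - b^2 ->
  pd (L_hem r1 r2 s) k1 (mkq a b c d) = - r1 * b / (1 - a^2 - b^2).
Proof.
move=> Hw; apply: pd1.
apply: (is_derive_ext (fun t => r1 * ln (Rabs (s * sqrt (1 - t^2 - a^2))) + r2 / 2 * (c^2 + d^2))).
  by move=> t; rewrite Lhem_mkq; replace (1 - a^2 - t^2) with (1 - t^2 - a^2) by ring.
have -> : - r1 * b / (1 - a^2 - b^2) = r1 * (- b / (1 - b^2 - a^2)) + 0.
  by rewrite /Rdiv; replace (1 - b^2 - a^2) with (1 - a^2 - b^2) by ring; ring.
apply: is_derive_plus; [apply: is_derive_scal; apply: ln_abs_deriv => //; lra | apply: is_derive_const].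
Qed.

Lemma pdL2 a b c d : pd (L_hem r1 r2 s) k2 (mkq a b c d) = r2 * c.
Proof.
apply: pd2; apply: (is_derive_ext (fun t => r1 * ln (Rabs (s * sqrt (1 - a^2 - b^2))) + r2 / 2 * (t^2 + d^2))).
  by move=> t; rewrite Lhem_mkq.
auto_derive => //; field.
Qed.
Lemma pdL3 a b c d : pd (L_hem r1 r2 s) k3 (mkq a b c d) = r2 * d.
Proof.
apply: pd3; apply: (is_derive_ext (fun t => r1 * ln (Rabs (s * sqrt (1 - a^2 - b^2))) + r2 / 2 * (c^2 + t^2))).
  by move=> t; rewrite Lhem_mkq.
auto_derive => //; field.
Qed.
End Hem.

Lemma pdH0 s a b c d : pd (H_hem s) k0 (mkq a b c d) = c / 2.
Proof. apply: pd0; apply: (is_derive_ext (fun t => (t * c + b * d) / 2)); first by move=> t; rewrite Hhem_mkq.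
auto_derive => //; field. Qed.
Lemma pdH1 s a b c d : pd (H_hem s) k1 (mkq a b c d) = d / 2.
Proof. apply: pd1; apply: (is_derive_ext (fun t => (a * c + t * d) / 2)); first by move=> t; rewrite Hhem_mkq.
auto_derive => //; field. Qed.
Lemma pdH2 s a b c d : pd (H_hem s) k2 (mkq a b c d) = a / 2.
Proof. apply: pd2; apply: (is_derive_ext (fun t => (a * t + b * d) / 2)); first by move=> t; rewrite Hhem_mkq.
auto_derive => //; field. Qed.
Lemma pdH3 s a b c d : pd (H_hem s) k3 (mkq a b c d) = b / 2.
Proof. apply: pd3; apply: (is_derive_ext (fun t => (a * c + b * t) / 2)); first by move=> t; rewrite Hhem_mkq.
auto_derive => //; field. Qed.

Lemma pdLc0 r2 a b c d : pd (Lsm_cyl r2) k0 (mkq a b c d) = 0.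
Proof. apply: pd0; apply: (is_derive_ext (fun t => r2 / 2 * (c^2 + d^2))); first by move=> t; rewrite Lsmcyl_mkq.
auto_derive => //; field. Qed.
Lemma pdLc1 r2 a b c d : pd (Lsm_cyl r2) k1 (mkq a b c d) = 0.
Proof. apply: pd1; apply: (is_derive_ext (fun t => r2 / 2 * (c^2 + d^2))); first by move=> t; rewrite Lsmcyl_mkq.
auto_derive => //; field. Qed.
Lemma pdLc2 r2 a b c d : pd (Lsm_cyl r2) k2 (mkq a b c d) = r2 * c.
Proof. apply: pd2; apply: (is_derive_ext (fun t => r2 / 2 * (t^2 + d^2))); first by move=> t; rewrite Lsmcyl_mkq.
auto_derive => //; field. Qed.
Lemma pdLc3 r2 a b c d : pd (Lsm_cyl r2) k3 (mkq a b c d) = r2 * d.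
Proof. apply: pd3; apply: (is_derive_ext (fun t => r2 / 2 * (c^2 + t^2))); first by move=> t; rewrite Lsmcyl_mkq.
auto_derive => //; field. Qed.

Lemma pdHc0 a b c d : pd H_cyl k0 (mkq a b c d) = sqrt (1 - b^2) * (- sin a * c + cos a * d) / 2.
Proof. apply: pd0; apply: (is_derive_ext (fun t => (sqrt (1 - b^2) * cos t * c + sqrt (1 - b^2) * sin t * d) / 2)); first by move=> t; rewrite Hcyl_mkq.
auto_derive => //; replace (1 - b * (b * 1)) with (1 - b^2) by ring; field. Qed.
Lemma pdHc1 a b c d : -1 < b < 1 -> pd H_cyl k1 (mkq a b c d) = - b / sqrt (1 - b^2) * (cos a * c + sin a * d) / 2.
Proof. move=> Hb.
have Hw : 0 < 1 - b^2 by nra.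
have HS := sqrt_lt_R0 _ Hw.
apply: pd1; apply: (is_derive_ext (fun t => (sqrt (1 - t^2) * cos a * c + sqrt (1 - t^2) * sin a * d) / 2)); first by move=> t; rewrite Hcyl_mkq.
auto_derive.
- replace (1 + - (b * (b * 1))) with (1 - b^2) by ring. by split.
- replace (1 + - (b * (b * 1))) with (1 - b^2) by ring. field. lra.
Qed.
Lemma pdHc2 a b c d : pd H_cyl k2 (mkq a b c d) = sqrt (1 - b^2) * cos a / 2.
Proof. apply: pd2; apply: (is_derive_ext (fun t => (sqrt (1 - b^2) * cos a * t + sqrt (1 - b^2) * sin a * d) / 2)); first by move=> t; rewrite Hcyl_mkq.
auto_derive => //; replace (1 - b * (b * 1)) with (1 - b^2) by ring; field. Qed.
Lemma pdHc3 a b c d : pd H_cyl k3 (mkq a b c d) = sqrt (1 - b^2) * sin a / 2.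
Proof. apply: pd3; apply: (is_derive_ext (fun t => (sqrt (1 - b^2) * cos a * c + sqrt (1 - b^2) * sin a * t) / 2)); first by move=> t; rewrite Hcyl_mkq.
auto_derive => //; replace (1 - b * (b * 1)) with (1 - b^2) by ring; field. Qed.

Lemma loc_w : locally 0 (fun t => 0 < 1 - t^2).
Proof.
have H2 : 0 < 1/2 by lra.
exists (mkposreal _ H2) => t /= Ht.
have : Rabs (t - 0) < 1/2 by exact: Ht.
rewrite Rminus_0_r => /Rabs_def2 [? ?]. nra.
Qed.

Lemma ord4_cases (i : 'I_4) : i = k0 \/ i = k1 \/ i = k2 \/ i = k3.
Proof.
case: i => -[|[|[|[|j]]]] Hj.
- by left; apply: val_inj.
- by right; left; apply: val_inj.
- by right; right; left; apply: val_inj.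
- by right; right; right; apply: val_inj.
- by [].
Qed.

Definition o4 := mkq 0 0 0 0.

Ltac hess_ext l :=
  eapply is_derive_ext; [move=> t; symmetry; rewrite l; reflexivity | auto_derive => //; field].

Lemma hessH s i j : hess (H_hem s) o4 i j =
  if ((i == k0) && (j == k2)) || ((i == k2) && (j == k0)) ||
     ((i == k1) && (j == k3)) || ((i == k3) && (j == k1)) then 1/2 else 0.
Proof.
rewrite /hess mxE /o4.
case: (ord4_cases i) => [->|[->|[->|->]]]; case: (ord4_cases j) => [->|[->|[->|->]]] /=;
  first [apply: pd0 | apply: pd1 | apply: pd2 | apply: pd3];
  first [hess_ext pdH0 | hess_ext pdH1 | hess_ext pdH2 | hess_ext pdH3].
Qed.

Lemma hessL r1 r2 s (Hs : s = 1 \/ s = -1) i j : hess (L_hem r1 r2 s) o4 i j =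
  if i == j then (if (i == k0) || (i == k1) then - r1 else r2) else 0.
Proof.
rewrite /hess mxE /o4.
case: (ord4_cases i) => [->|[->|[->|->]]]; case: (ord4_cases j) => [->|[->|[->|->]]] /=;
  first [apply: pd0 | apply: pd1 | apply: pd2 | apply: pd3];
  first [hess_ext pdL2 | hess_ext pdL3 | idtac].
- apply: (is_derive_ext_loc (fun t => - r1 * t / (1 - t^2 - 0^2))).
    apply: filter_imp loc_w => t Ht; rewrite pdL0 //; nra.
  auto_derive; [nra | field].
- apply: (is_derive_ext_loc (fun t => - r1 * 0 / (1 - t^2 - 0^2))).
    apply: filter_imp loc_w => t Ht; rewrite pdL1 //; nra.
  auto_derive; [nra | field].
- apply: (is_derive_ext_loc (fun t => - r1 * 0 / (1 - 0^2 - t^2))).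
    apply: filter_imp loc_w => t Ht; rewrite pdL0 //; nra.
  auto_derive; [nra | field].
- apply: (is_derive_ext_loc (fun t => - r1 * t / (1 - 0^2 - t^2))).
    apply: filter_imp loc_w => t Ht; rewrite pdL1 //; nra.
  auto_derive; [nra | field].
- apply: (is_derive_ext (fun t => - r1 * 0 / (1 - 0^2 - 0^2))).
    move=> t; rewrite pdL0 //; nra.
  auto_derive; [nra | field].
- apply: (is_derive_ext (fun t => - r1 * 0 / (1 - 0^2 - 0^2))).
    move=> t; rewrite pdL1 //; nra.
  auto_derive; [nra | field].
- apply: (is_derive_ext (fun t => - r1 * 0 / (1 - 0^2 - 0^2))).
    move=> t; rewrite pdL0 //; nra.
  auto_derive; [nra | field].
- apply: (is_derive_ext (fun t => - r1 * 0 / (1 - 0^2 - 0^2))).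
    move=> t; rewrite pdL1 //; nra.
  auto_derive; [nra | field].
Qed.

Import GRing.Theory Num.Theory.

Ltac toR := rewrite -?RplusE -?RmultE -?RoppE -?RinvE -?RpowE -?R0E -?R1E.


Lemma hem_indep a b x y u v w r1 r2 : 0 < w -> 0 < r1 -> 0 < r2 ->
  ~ (x = 0 /\ y = 0 /\ u = 0 /\ v = 0) ->
  a * (- r1 * x / w) + b * (u / 2) = 0 ->
  a * (- r1 * y / w) + b * (v / 2) = 0 ->
  a * (r2 * u) + b * (x / 2) = 0 ->
  a * (r2 * v) + b * (y / 2) = 0 -> a = 0 /\ b = 0.
Proof.
move=> Hw H1 H2 Hn e0 e1 e2 e3.
set k := r1 / w.
have Hk : 0 < k by apply: Rdiv_lt_0_compat.
have f1 : a * (k * x^2 + r2 * u^2) = 0.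
  replace (a * (k * x^2 + r2 * u^2)) with
    (- ((a * (- r1 * x / w) + b * (u / 2)) * x - (a * (r2 * u) + b * (x / 2)) * u))
    by (rewrite /k; field; lra).
  rewrite e0 e2; ring.
have f2 : a * (k * y^2 + r2 * v^2) = 0.
  replace (a * (k * y^2 + r2 * v^2)) with
    (- ((a * (- r1 * y / w) + b * (v / 2)) * y - (a * (r2 * v) + b * (y / 2)) * v))
    by (rewrite /k; field; lra).
  rewrite e1 e3; ring.
case: (Req_dec a 0) => Ha.
- subst a. split => //.
  have : b * (u^2 + v^2 + x^2 + y^2) = 0.
    have g0 : b * u = 0 by lra.
    have g1 : b * v = 0 by lra.
    have g2 : b * x = 0 by lra.
    have g3 : b * y = 0 by lra.
    replace (b * (u^2 + v^2 + x^2 + y^2)) with ((b*u)*u + (b*v)*v + (b*x)*x + (b*y)*y) by ring.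
    rewrite g0 g1 g2 g3; ring.
  case/Rmult_integral => // Hs.
  exfalso; apply: Hn; nra.
- exfalso; apply: Hn.
  have g1 : k * x^2 + r2 * u^2 = 0 by case: (Rmult_integral _ _ f1).
  have g2 : k * y^2 + r2 * v^2 = 0 by case: (Rmult_integral _ _ f2).
  have hx : x^2 = 0 by nra.
  have hu : u^2 = 0 by nra.
  have hy : y^2 = 0 by nra.
  have hv : v^2 = 0 by nra.
  repeat split; nra.
Qed.

Lemma cyl_indep a b z c s T u v r1 r2 : 0 < T -> 0 < r1 -> 0 < r2 -> c^2 + s^2 = 1 ->
  a * r1 + b * (z * (- z / T * (c * u + s * v) / 2)) = 0 ->
  a * (r2 * u) + b * (T * c / 2) = 0 ->
  a * (r2 * v) + b * (T * s / 2) = 0 -> a = 0 /\ b = 0.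
Proof.
move=> HS H1 H2 Hcs e1 e2 e3.
have f1 : a * r2 * (c * u + s * v) + b * T / 2 = 0.
  replace (a * r2 * (c * u + s * v) + b * T / 2) with
    ((a * (r2 * u) + b * (T * c / 2)) * c + (a * (r2 * v) + b * (T * s / 2)) * s - b * T / 2 * (c^2 + s^2 - 1))
    by field.
  rewrite e2 e3 Hcs; field.
have f2 : a * r1 * T - b * z^2 * (c * u + s * v) / 2 = 0.
  replace (a * r1 * T - b * z^2 * (c * u + s * v) / 2) with ((a * r1 + b * (z * (- z / T * (c * u + s * v) / 2))) * T)
    by (field; lra).
  rewrite e1; field.
have f3 : T * (a^2 * (r1 * r2) + b^2 * z^2 / 4) = 0.
  replace (T * (a^2 * (r1 * r2) + b^2 * z^2 / 4)) with
    ((a * r1 * T - b * z^2 * (c * u + s * v) / 2) * (a * r2) + (a * r2 * (c * u + s * v) + b * T / 2) * (b * z^2 / 2)) by (field).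
  rewrite f1 f2; field.
have f4 : a^2 * (r1 * r2) + b^2 * z^2 / 4 = 0.
  case: (Rmult_integral _ _ f3) => //; lra.
have Ha : a = 0.
  have hr : 0 < r1 * r2 by nra.
  have h4 : 0 <= b^2 * z^2 / 4.
    apply: Rmult_le_pos; last lra. apply: Rmult_le_pos; apply: pow2_ge_0.
  have h5 : 0 <= a^2 * (r1 * r2) by apply: Rmult_le_pos; [apply: pow2_ge_0 | lra].
  have h6 : a^2 * (r1 * r2) = 0 by lra.
  case: (Rmult_integral _ _ h6) => [h7|]; last lra.
  nra.
subst a. split => //.
have g2 : b * T * c = 0 by lra.
have g3 : b * T * s = 0 by lra.
have : b * T * (c^2 + s^2) = 0.
  replace (b * T * (c^2 + s^2)) with ((b * T * c) * c + (b * T * s) * s) by field.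
  rewrite g2 g3; field.
rewrite Hcs Rmult_1_r.
case/Rmult_integral => //; lra.
Qed.

Close Scope R_scope.
Local Open Scope ring_scope.

Lemma rank2 (a1 a2 : 'rV[R]_4) :
  (forall a b : R, (forall j, a * a1 0 j + b * a2 0 j = 0) -> a = 0 /\ b = 0) ->
  \rank (col_mx a1 a2) = 2%N.
Proof.
move=> H. apply/eqP. change (row_free (col_mx a1 a2)). apply: inj_row_free => w Hw.
rewrite -[w]hsubmxK in Hw *. rewrite mul_row_col in Hw.
rewrite (mx11_scalar (lsubmx w)) (mx11_scalar (rsubmx w)) !mul_scalar_mx in Hw *.
have Hj : forall j, lsubmx w 0 0 * a1 0 j + rsubmx w 0 0 * a2 0 j = 0.
  move=> j; have := congr1 (fun M : 'rV_4 => M 0 j) Hw. by rewrite !mxE.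
have [h1 h2] := H _ _ Hj.
rewrite h1 h2; apply/matrixP => i j; rewrite !mxE; case: splitP => k _; by rewrite !mxE mul0rn.
Qed.

Lemma rank0 : \rank (col_mx (0 : 'rV[R]_4) (0 : 'rV[R]_4)) = 0%N.
Proof. by rewrite col_mx0 mxrank0. Qed.
Open Scope R_scope.

Lemma sgnz_pm z : sgnz z = 1 \/ sgnz z = -1.
Proof. rewrite /sgnz; case: ifP => _; [left|right]; by []. Qed.

Close Scope R_scope.
Local Open Scope ring_scope.

Lemma dFhem_rank2 r1 r2 x y z u v : 0 < r1 -> 0 < r2 -> onM x y z u v -> z != 0 ->
  ~ (x = 0 /\ y = 0 /\ u = 0 /\ v = 0) -> \rank (dF_hem r1 r2 (sgnz z) (mkq x y u v)) = 2%N.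
Proof.
Open Scope R_scope.
move=> /RltP H1 /RltP H2 HM /eqP Hz Hn. rewrite /dF_hem. apply: rank2 => a b Hj.
have Hs := sgnz_pm z.
move: HM; rewrite /onM; toR => HM.
have Hw : 0 < 1 - x^2 - y^2.
  have : 0 < z^2 by apply: pow2_gt_0.
  lra.
have e0 := Hj k0; have e1 := Hj k1; have e2 := Hj k2; have e3 := Hj k3.
rewrite !mxE in e0 e1 e2 e3.
rewrite pdL0 // pdH0 in e0. rewrite pdL1 // pdH1 in e1.
rewrite pdL2 pdH2 in e2. rewrite pdL3 pdH3 in e3.
move: e0 e1 e2 e3; toR => e0 e1 e2 e3.
exact: (hem_indep _ _ _ _ _ _ _ _ _ Hw H1 H2 Hn e0 e1 e2 e3).
Qed.
Close Scope R_scope.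

Lemma dFcyl_rank2 r1 r2 th z u v : 0 < r1 -> 0 < r2 -> -1 < z < 1 ->
  \rank (dF_cyl r1 r2 (mkq th z u v)) = 2%N.
Proof.
Open Scope R_scope.
move=> /RltP H1 /RltP H2 /andP [/RltP Hz1 /RltP Hz2]. rewrite /dF_cyl. apply: rank2 => a b Hj.
move: Hz1 Hz2; toR => Hz1 Hz2.
have Hb : -1 < z < 1 by split; lra.
have Hw : 0 < 1 - z^2 by nra.
have HT := sqrt_lt_R0 _ Hw.
have Hcs : cos th ^ 2 + sin th ^ 2 = 1.
  have := sin2_cos2 th; rewrite /Rsqr => <-; ring.
have e1 := Hj k1; have e2 := Hj k2; have e3 := Hj k3.
rewrite /bdL_cyl /bdH_cyl /bgrad !mxE /= in e1 e2 e3.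
rewrite pdLc1 pdHc1 // in e1. rewrite pdLc2 pdHc2 in e2. rewrite pdLc3 pdHc3 in e3.
move: e1 e2 e3; rewrite mkq1; toR => e1 e2 e3.
rewrite Rmult_0_r Rplus_0_r in e1. rewrite Rplus_0_l in e2 e3.
rewrite Rplus_0_l in e3. exact: (cyl_indep _ _ _ _ _ _ _ _ _ _ HT H1 H2 Hcs e1 e2 e3).
Qed.
Close Scope R_scope.

Open Scope R_scope.

Lemma theta_ex (x y : R) : x^2 + y^2 = 1 -> exists th, x = cos th /\ y = sin th.
Proof.
move=> H.
have Hy2 := pow2_ge_0 y.
have Hx2 : x^2 <= 1 by lra.
have Hx : -1 <= x <= 1 by split; nra.
have Hs : sqrt (1 - x²) = Rabs y.
  rewrite -sqrt_Rsqr_abs /Rsqr; f_equal; nra.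
case: (Rle_or_lt 0 y) => Hy.
- exists (acos x); rewrite cos_acos // sin_acos // Hs Rabs_pos_eq //.
- exists (- acos x); rewrite cos_neg sin_neg cos_acos // sin_acos // Hs Rabs_left //; split => //; ring.
Qed.

Lemma theta_ex2 (x y u v : R) : onM x y 0 u v -> exists th, x = cos th /\ y = sin th.
Proof. rewrite /onM; toR => H; apply: theta_ex; simpl in *; lra. Qed.

Lemma gradL_o4 r1 r2 s : (s = 1 \/ s = -1) -> forall i, pd (L_hem r1 r2 s) i o4 = 0.
Proof.
move=> Hs i; rewrite /o4; case: (ord4_cases i) => [->|[->|[->|->]]].
- rewrite pdL0 //; [field|]; lra.
- rewrite pdL1 //; [field|]; lra.
- rewrite pdL2; ring.
- rewrite pdL3; ring.
Qed.

Lemma gradH_o4 s : forall i, pd (H_hem s) i o4 = 0.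
Proof.
move=> i; rewrite /o4; case: (ord4_cases i) => [->|[->|[->|->]]].
- rewrite pdH0; field.
- rewrite pdH1; field.
- rewrite pdH2; field.
- rewrite pdH3; field.
Qed.

Close Scope R_scope.
Local Open Scope ring_scope.


From mathcomp Require Import ring lra.
Local Open Scope ring_scope.

Lemma det4 (T : comRingType) (f : nat -> nat -> T) :
  \det (\matrix_(i < 4, j < 4) f i j) =
  f 0 0 * f 1 1 * f 2 2 * f 3 3 - f 0 0 * f 1 1 * f 2 3 * f 3 2 - f 0 0 * f 1 2 * f 2 1 * f 3 3 + f 0 0 * f 1 2 * f 2 3 * f 3 1 + f 0 0 * f 1 3 * f 2 1 * f 3 2 - f 0 0 * f 1 3 * f 2 2 * f 3 1 - f 0 1 * f 1 0 * f 2 2 * f 3 3 + f 0 1 * f 1 0 * f 2 3 * f 3 2 + f 0 1 * f 1 2 * f 2 0 * f 3 3 - f 0 1 * f 1 2 * f 2 3 * f 3 0 - f 0 1 * f 1 3 * f 2 0 * f 3 2 + f 0 1 * f 1 3 * f 2 2 * f 3 0 + f 0 2 * f 1 0 * f 2 1 * f 3 3 - f 0 2 * f 1 0 * f 2 3 * f 3 1 - f 0 2 * f 1 1 * f 2 0 * f 3 3 + f 0 2 * f 1 1 * f 2 3 * f 3 0 + f 0 2 * f 1 3 * f 2 0 * f 3 1 - f 0 2 * f 1 3 * f 2 1 * f 3 0 - f 0 3 * f 1 0 * f 2 1 * f 3 2 + f 0 3 * f 1 0 * f 2 2 * f 3 1 + f 0 3 * f 1 1 * f 2 0 * f 3 2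 - f 0 3 * f 1 1 * f 2 2 * f 3 0 - f 0 3 * f 1 2 * f 2 0 * f 3 1 + f 0 3 * f 1 2 * f 2 1 * f 3 0.
Proof.
rewrite (expand_det_row _ ord0) !big_ord_recl big_ord0 /cofactor.
rewrite !(expand_det_row _ ord0) !big_ord_recl !big_ord0 /cofactor.
rewrite !(expand_det_row _ ord0) !big_ord_recl !big_ord0 /cofactor.
rewrite !det_mx11 !mxE /=.
ring.
Qed.
Local Open Scope ring_scope.

Definition M4 (e : nat -> nat -> R) : 'M[R]_4 := \matrix_(i, j) e i j.

Lemma M4E e (i j : 'I_4) : M4 e i j = e i j.
Proof. by rewrite mxE. Qed.

Lemma eqM4 e f : (forall i j, (i < 4)%N -> (j < 4)%N -> e i j = f i j) -> M4 e = M4 f.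
Proof. by move=> H; apply/matrixP => i j; rewrite !mxE; apply: H. Qed.

Lemma M4_inj e f i j : M4 e = M4 f -> (i < 4)%N -> (j < 4)%N -> e i j = f i j.
Proof.
move=> H Hi Hj. have := congr1 (fun A : 'M_4 => A (inord i) (inord j)) H.
by rewrite /= !mxE !inordK.
Qed.

Lemma toM4 (A : 'M[R]_4) : A = M4 (fun i j => A (inord i) (inord j)).
Proof. by apply/matrixP => i j; rewrite mxE !inord_val. Qed.

Lemma mulM4 e f : M4 e *m M4 f =
  M4 (fun i j => e i 0%N * f 0%N j + e i 1%N * f 1%N j + e i 2%N * f 2%N j + e i 3%N * f 3%N j).
Proof.
apply/matrixP => i j; rewrite !mxE !big_ord_recl big_ord0 !mxE /=.
by rewrite addr0 !addrA.
Qed.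

Lemma addM4 e f : M4 e + M4 f = M4 (fun i j => e i j + f i j).
Proof. by apply/matrixP => i j; rewrite !mxE. Qed.
Lemma oppM4 e : - M4 e = M4 (fun i j => - e i j).
Proof. by apply/matrixP => i j; rewrite !mxE. Qed.
Lemma subM4 e f : M4 e - M4 f = M4 (fun i j => e i j - f i j).
Proof. by apply/matrixP => i j; rewrite !mxE. Qed.
Lemma scaleM4 c e : c *: M4 e = M4 (fun i j => c * e i j).
Proof. by apply/matrixP => i j; rewrite !mxE. Qed.
Lemma trM4 e : (M4 e)^T = M4 (fun i j => e j i).
Proof. by apply/matrixP => i j; rewrite !mxE. Qed.
Lemma zeroM4 : (0 : 'M[R]_4) = M4 (fun _ _ => 0).
Proof. by apply/matrixP => i j; rewrite !mxE. Qed.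
Lemma oneM4 : (1%:M : 'M[R]_4) = M4 (fun i j => (i == j)%:R).
Proof. by apply/matrixP => i j; rewrite !mxE. Qed.

Definition M4s := (mulM4, addM4, subM4, oppM4, scaleM4, trM4).

Ltac M4eq tac :=
  apply: eqM4 => -[|[|[|[|?]]]] -[|[|[|[|?]]]] ? ? //=; tac; try done.

Section Mats.
Variables r1 r2 : R.
Hypotheses (Hr1 : 0 < r1) (Hr2 : 0 < r2).

Definition OmE := M4 (fun i j => match i, j with
  | 0%N, 1%N => - r1 | 1%N, 0%N => r1 | 2%N, 3%N => r2 | 3%N, 2%N => - r2 | _, _ => 0 end).
Definition OiE := M4 (fun i j => match i, j with
  | 0%N, 1%N => r1^-1 | 1%N, 0%N => - r1^-1 | 2%N, 3%N => - r2^-1 | 3%N, 2%N => r2^-1 | _, _ => 0 end).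

Lemma r1n0 : r1 != 0. Proof. by rewrite lt0r_neq0. Qed.
Lemma r2n0 : r2 != 0. Proof. by rewrite lt0r_neq0. Qed.

Lemma OmOi : OmE *m OiE = 1%:M.
Proof.
rewrite oneM4 /OmE /OiE mulM4.
have h1 := r1n0; have h2 := r2n0.
M4eq ltac:(field; rewrite ?h1 ?h2).
Qed.

Lemma invOm : invmx OmE = OiE.
Proof.
have [U1 U2] := mulmx1_unit OmOi.
by rewrite -[RHS]mul1mx -(mulVmx U1) -mulmxA OmOi mulmx1.
Qed.

End Mats.
Local Open Scope ring_scope.

Section M.
Variables r1 r2 : R.
Hypotheses (Hr1 : 0 < r1) (Hr2 : 0 < r2).

Lemma o4E : mkq 0 0 0 0 = o4. Proof. reflexivity. Qed.
Lemma wo4 : 1 - o4 k0 ^+ 2 - o4 k1 ^+ 2 = 1.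
Proof. by rewrite /o4 /mkq /= expr0n /= !subr0. Qed.

Lemma Om_o4 : Omega_hem r1 r2 o4 = OmE r1 r2.
Proof.
apply/matrixP => i j; rewrite !mxE /=.
case: (ord4_cases i) => [->|[->|[->|->]]]; case: (ord4_cases j) => [->|[->|[->|->]]] //=;
 rewrite wo4 divr1 ?opprK //.
Qed.

Definition HLE := M4 (fun i j => match i, j with
  | 0%N, 0%N => - r1 | 1%N, 1%N => - r1 | 2%N, 2%N => r2 | 3%N, 3%N => r2 | _, _ => 0 end).
Definition HHE := M4 (fun i j => match i, j with
  | 0%N, 2%N => 2^-1 | 2%N, 0%N => 2^-1 | 1%N, 3%N => 2^-1 | 3%N, 1%N => 2^-1 | _, _ => 0 end).

Lemma half_R : Rdiv (IZR 1) (IZR 2) = 2^-1.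
Proof. by rewrite RdivE R1E mul1r IZRposE INRE. Qed.

Lemma hessL_E s : (s = 1 \/ s = -1)%R -> hess (L_hem r1 r2 s) o4 = HLE.
Proof.
move=> Hs; apply/matrixP => i j; rewrite hessL // mxE.
case: (ord4_cases i) => [->|[->|[->|->]]]; case: (ord4_cases j) => [->|[->|[->|->]]] //=.
Qed.

Lemma hessH_E s : hess (H_hem s) o4 = HHE.
Proof.
apply/matrixP => i j; rewrite hessH mxE.
case: (ord4_cases i) => [->|[->|[->|->]]]; case: (ord4_cases j) => [->|[->|[->|->]]] //=; by rewrite half_R.
Qed.

Definition ALE := M4 (fun i j => match i, j with
  | 0%N, 1%N => -1 | 1%N, 0%N => 1 | 2%N, 3%N => -1 | 3%N, 2%N => 1 | _, _ => 0 end).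
Definition AHE := M4 (fun i j => match i, j with
  | 0%N, 3%N => (2 * r1)^-1 | 1%N, 2%N => - (2 * r1)^-1
  | 2%N, 1%N => - (2 * r2)^-1 | 3%N, 0%N => (2 * r2)^-1 | _, _ => 0 end).

Lemma two_n0 : (2 : R) != 0. Proof. by apply/eqP; apply: IZR_neq. Qed.

Lemma AL_E : OiE r1 r2 *m HLE = ALE.
Proof.
have h1 : r1 != 0 by rewrite lt0r_neq0. have h2 : r2 != 0 by rewrite lt0r_neq0.
rewrite /OiE /HLE /ALE mulM4; M4eq ltac:(field; rewrite ?h1 ?h2).
Qed.

Lemma AH_E : OiE r1 r2 *m HHE = AHE.
Proof.
have h1 : r1 != 0 by rewrite lt0r_neq0. have h2 : r2 != 0 by rewrite lt0r_neq0; have h3 := two_n0.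
rewrite /OiE /HHE /AHE mulM4; M4eq ltac:(field; rewrite ?h1 ?h2 ?h3).
Qed.
End M.
Local Open Scope ring_scope.

Section C.
Variables r1 r2 : R.
Hypotheses (Hr1 : 0 < r1) (Hr2 : 0 < r2).
Let AL := ALE.
Let AH := AHE r1 r2.
Let Om := OmE r1 r2.

Lemma AL_sp : in_sp Om AL.
Proof. rewrite /in_sp /Om /AL /OmE /ALE !M4s zeroM4; M4eq ltac:(ring). Qed.

Lemma AH_sp : in_sp Om AH.
Proof. 
have h1 : r1 != 0 by rewrite lt0r_neq0. have h2 : r2 != 0 by rewrite lt0r_neq0. have h3 := two_n0.
rewrite /in_sp /Om /AH /OmE /AHE !M4s zeroM4; M4eq ltac:(field; rewrite ?h1 ?h2 ?h3). Qed.

Lemma span_lie X Y : in_span2 AL AH X -> in_span2 AL AH Y -> lie X Y = 0.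
Proof.
have h1 : r1 != 0 by rewrite lt0r_neq0. have h2 : r2 != 0 by rewrite lt0r_neq0. have h3 := two_n0.
move=> [c1 [c2 ->]] [d1 [d2 ->]].
rewrite /lie /AH /AL /AHE /ALE !M4s zeroM4; M4eq ltac:(field; rewrite ?h1 ?h2 ?h3).
Qed.

Lemma self_norm X : in_sp Om X ->
  (forall Y, in_span2 AL AH Y -> in_span2 AL AH (lie X Y)) -> in_span2 AL AH X.
Proof.
have h1 : r1 != 0 by rewrite lt0r_neq0. have h2 : r2 != 0 by rewrite lt0r_neq0. have h3 := two_n0.
rewrite (toM4 X); move: (fun i j => X (inord i) (inord j)) => e.
move=> Hsp Hn.
have [c1 [c2 Hc]] : in_span2 AL AH (lie (M4 e) AL).
  apply: Hn; exists 1, 0; by rewrite scale1r scale0r addr0.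
have [d1 [d2 Hd]] : in_span2 AL AH (lie (M4 e) AH).
  apply: Hn; exists 0, 1; by rewrite scale1r scale0r add0r.
move: Hsp Hc Hd; rewrite /in_sp /lie /Om /AH /AL /OmE /AHE /ALE !M4s zeroM4 => Hsp Hc Hd.
have S1 := M4_inj _ _ 0 1 Hsp isT isT.
have S3 := M4_inj _ _ 0 2 Hsp isT isT.
have S4 := M4_inj _ _ 0 3 Hsp isT isT.
have S2 := M4_inj _ _ 2 3 Hsp isT isT.
have E1 := M4_inj _ _ 0 0 Hc isT isT.
have E2 := M4_inj _ _ 0 1 Hc isT isT.
have E3 := M4_inj _ _ 1 0 Hc isT isT.
have E4 := M4_inj _ _ 0 2 Hc isT isT.
have E5 := M4_inj _ _ 0 3 Hc isT isT.
have E6 := M4_inj _ _ 1 2 Hc isT isT.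
have E7 := M4_inj _ _ 2 0 Hc isT isT.
have E8 := M4_inj _ _ 2 1 Hc isT isT.
have E9 := M4_inj _ _ 3 0 Hc isT isT.
have E10 := M4_inj _ _ 2 2 Hc isT isT.
have E11 := M4_inj _ _ 2 3 Hc isT isT.
have E12 := M4_inj _ _ 3 2 Hc isT isT.
have N1 := M4_inj _ _ 0 2 Hd isT isT.
have N2 := M4_inj _ _ 0 1 Hd isT isT.
have N3 := M4_inj _ _ 2 3 Hd isT isT.
clear Hsp Hc Hd Hn. simpl in *.
have ha : (2 * r1)^-1 != 0 by rewrite invr_eq0 mulf_neq0.
have hb : (2 * r2)^-1 != 0 by rewrite invr_eq0 mulf_neq0.
have F11' : e 1 1 = e 0 0 by lra.
rewrite F11' in S1.
have F00 : e 0 0 = 0 by apply: (mulIf h1); rewrite mul0r; lra.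
have F11 : e 1 1 = 0 by rewrite F11'.
have F33' : e 3 3 = e 2 2 by lra.
rewrite F33' in S2.
have F22 : e 2 2 = 0 by apply: (mulIf h2); rewrite mul0r; lra.
have F33 : e 3 3 = 0 by rewrite F33'.
have F01 : e 0 1 = - e 1 0 by lra.
have F03 : e 0 3 = - e 1 2 by lra.
have F13' : e 1 3 = e 0 2 by lra.
have F31' : e 3 1 = e 2 0 by lra.
have F21' : e 2 1 = - e 3 0 by lra.
have F32 : e 3 2 = e 1 0.
  have K : (2 * r1)^-1 * (e 0 1 + e 3 2) = 0 by lra.
  move: K => /eqP; rewrite mulf_eq0 (negbTE ha) /= => /eqP K; lra.
have F23 : e 2 3 = - e 1 0 by lra.
rewrite F13' F31' in N2 N3. rewrite F13' in S4.
have K : (2 * r2)^-1 * e 0 2 + (2 * r1)^-1 * e 2 0 = 0 by lra.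
have K2 : r1 * e 0 2 + r2 * e 2 0 = 2 * r1 * r2 * ((2 * r2)^-1 * e 0 2 + (2 * r1)^-1 * e 2 0).
  by field; rewrite h1 h2.
rewrite K mulr0 in K2.
have F02 : e 0 2 = 0 by apply: (mulIf h1); rewrite mul0r; lra.
have F20 : e 2 0 = 0 by apply: (mulIf h2); rewrite mul0r; lra.
have F13 : e 1 3 = 0 by rewrite F13'.
have F31 : e 3 1 = 0 by rewrite F31'.
have F30 : e 3 0 = - (r1 / r2) * e 1 2.
  apply: (mulfI h2). have -> : r2 * e 3 0 = - (r1 * e 1 2) by lra. field; by rewrite h2.
have F21 : e 2 1 = r1 / r2 * e 1 2 by rewrite F21' F30 mulNr opprK.
exists (e 1%N 0%N), (- (2 * r1) * e 1%N 2%N).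
rewrite !M4s.
M4eq ltac:(rewrite ?F00 ?F01 ?F02 ?F03 ?F11 ?F13 ?F20 ?F21 ?F22 ?F23 ?F30 ?F31 ?F32 ?F33; field; rewrite ?h1 ?h2 ?h3).
Qed.

Lemma cartan : cartan_span Om AL AH.
Proof.
split; first exact: AL_sp. split; first exact: AH_sp. split.
  move=> X Y HX HY; rewrite (span_lie _ _ HX HY); exists 0, 0; by rewrite !scale0r addr0.
split; last exact: self_norm.
exists 1%N => Xs Y; case: Xs => [|X [|? ?]] //= _ HX HY.
apply: (span_lie _ _ _ HY); apply: HX; exact: mem_head.
Qed.

Definition XE := M4 (fun i j => match i, j with
  | 0%N, 1%N => -1 | 0%N, 3%N => 1 | 1%N, 0%N => 1 | 1%N, 2%N => -1
  | 2%N, 1%N => - (r1 / r2) | 2%N, 3%N => -1 | 3%N, 0%N => r1 / r2 | 3%N, 2%N => 1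
  | _, _ => 0 end).

Lemma XE_eq : 1 *: AL + (2 * r1) *: AH = XE.
Proof.
have h1 : r1 != 0 by rewrite lt0r_neq0. have h2 : r2 != 0 by rewrite lt0r_neq0. have h3 := two_n0.
rewrite /AL /AH /ALE /AHE /XE !M4s; M4eq ltac:(field; rewrite ?h1 ?h2 ?h3).
Qed.

Definition cpf (e : nat -> nat -> R) (i j : nat) : {poly R} := 'X *+ (i == j) - (e i j)%:P.
Lemma char_polyM4 e : char_poly_mx (M4 e) = \matrix_(i < 4, j < 4) cpf e i j.
Proof. by apply/matrixP => i j; rewrite !mxE. Qed.

Lemma charXE a : a ^+ 2 = r1 / r2 ->
  char_poly XE = (('X - a%:P) ^+ 2 + (1 ^+ 2)%:P) * (('X + a%:P) ^+ 2 + (1 ^+ 2)%:P).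
Proof.
move=> Ha.
rewrite /char_poly /XE char_polyM4 det4 /cpf /=.
rewrite ?polyCN ?polyC0 ?expr1n ?polyC1 ?mulr1n ?mulr0n.
have -> : (r1 / r2)%:P = a%:P ^+ 2 by rewrite -Ha !expr2 polyCM.
ring.
Qed.

End C.

From mathcomp Require Import order.
Import Order.TTheory.

Lemma sgnz1 : sgnz 1 = 1.
Proof. by rewrite /sgnz ltr01. Qed.

Lemma NS_facts r1 r2 z : 0 < r1 -> 0 < r2 -> z = 1 \/ z = -1 ->
  [/\ fixed_pt r1 r2 0 0 z 0 0, nondeg_focus_focus r1 r2 0 0 z 0 0 &
      b_rank_dF r1 r2 0 0 z 0 0 0].
Proof.
move=> Hr1 Hr2 Hz.
have Hz0 : z != 0 by case: Hz => ->; [exact: oner_neq0 | rewrite oppr_eq0 oner_neq0].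
have Hs := sgnz_pm z.
have Hnz : ~~ (-1 < z < 1).
  by case: Hz => ->; apply/negP => /andP [h1 h2]; lra.
have GL : grad (L_hem r1 r2 (sgnz z)) (mkq 0 0 0 0) = 0.
  by apply/matrixP => i j; rewrite !mxE; apply: gradL_o4.
have GH : grad (H_hem (sgnz z)) (mkq 0 0 0 0) = 0.
  by apply/matrixP => i j; rewrite !mxE; apply: gradH_o4.
split.
- split; first by move=> _; split.
  by move=> th Hb; rewrite Hb in Hnz.
- split => //.
  change (mkq 0 0 0 0) with o4 in *.
  rewrite /= Om_o4 invOm // hessL_E // hessH_E AL_E // AH_E //.
  split; first exact: cartan.
  have Hr : 0 < r1 / r2 by rewrite divr_gt0.
  exists 1, (2 * r1), (Num.sqrt (r1 / r2)), 1.
  split; first by rewrite lt0r_neq0 // sqrtr_gt0.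
  split; first exact: oner_neq0.
  rewrite XE_eq //; apply: charXE => //. by rewrite sqr_sqrtr // ltW.
- split.
  + by move=> _; rewrite /dF_hem GL GH rank0.
  + by move=> th Hb; rewrite Hb in Hnz.
Qed.

Theorem proposition4p4 (rho1 rho2 : R) : 0 < rho1 -> 0 < rho2 ->
  (forall x y z u v : R, onM x y z u v ->
     (singular_pt rho1 rho2 x y z u v <->
        ((x, y, z, u, v) = (0, 0, 1, 0, 0) \/ (x, y, z, u, v) = (0, 0, -1, 0, 0))) /\
     ((x, y, z, u, v) <> (0, 0, 1, 0, 0) -> (x, y, z, u, v) <> (0, 0, -1, 0, 0) ->
        b_rank_dF rho1 rho2 x y z u v 2)) /\
  fixed_pt rho1 rho2 0 0 1 0 0 /\ fixed_pt rho1 rho2 0 0 (-1) 0 0 /\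
  nondeg_focus_focus rho1 rho2 0 0 1 0 0 /\ nondeg_focus_focus rho1 rho2 0 0 (-1) 0 0.
Proof.
move=> Hr1 Hr2.
have [F1 N1 B1] := NS_facts _ _ 1 Hr1 Hr2 (or_introl erefl).
have [F2 N2 B2] := NS_facts _ _ (-1) Hr1 Hr2 (or_intror erefl).
split; last by split; [exact: F1 | split; [exact: F2 | split; [exact: N1 | exact: N2]]].
move=> x y z u v HM.
have rank2all : (x, y, z, u, v) <> (0, 0, 1, 0, 0) -> (x, y, z, u, v) <> (0, 0, -1, 0, 0) ->
    b_rank_dF rho1 rho2 x y z u v 2.
  move=> hN hS; split.
  - move=> Hz; apply: dFhem_rank2 => //.
    move=> [hx [hy [hu hv]]]; subst x y u v.
    move: HM; rewrite /onM expr0n /= !add0r => HM.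
    have : (z - 1) * (z + 1) = 0.
      have -> : (z - 1) * (z + 1) = z ^+ 2 - 1 by ring.
      by rewrite HM subrr.
    move/eqP; rewrite mulf_eq0 => /orP [] /eqP h.
    + by apply: hN; have -> : z = 1 by rewrite -[z](subrK 1) h add0r.
    + by apply: hS; have -> : z = -1 by rewrite -[z](addrK 1) h sub0r.
  - move=> th Hz _ _; exact: dFcyl_rank2.
split; last exact: rank2all.
split.
- move=> [r [Hr Hb]]; apply: NNPP => Hn.
  have hN : (x, y, z, u, v) <> (0, 0, 1, 0, 0) by move=> h; apply: Hn; left.
  have hS : (x, y, z, u, v) <> (0, 0, -1, 0, 0) by move=> h; apply: Hn; right.
  have [Bh Bc] := rank2all hN hS.
  case: (eqVneq z 0) => Hz.
  + subst z.
    have [th [hx hy]] := theta_ex2 _ _ _ _ HM.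
    have Hb' : (-1 < (0:R) < 1) by apply/andP; split; [exact: ltrN10 | exact: ltr01].
    have E : R_sqrt.sqrt (1 - 0 ^+ 2) = 1 by rewrite RminusE expr0n /= ?mulr0n subr0 sqrt_1.
    have Ex : x = R_sqrt.sqrt (1 - 0 ^+ 2) * cos th by rewrite E mul1r.
    have Ey : y = R_sqrt.sqrt (1 - 0 ^+ 2) * sin th by rewrite E mul1r.
    have := Bc th Hb' Ex Ey. rewrite (Hb.2 th Hb' Ex Ey) => Hr2'.
    by rewrite Hr2' in Hr.
  + have := Bh Hz. rewrite (Hb.1 Hz) => Hr2'.
    by rewrite Hr2' in Hr.
- case=> [[-> -> -> -> ->] | [-> -> -> -> ->]]; exists 0%N; split => //.
Qed.
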